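(* For $K\ge N$, there is a symmetric matrix $H_K\in\mathbb{R}^{((K+2)n+m)\times((K+2)n+m)}$, not depending on $x_k$, $u_k$ or the reference values, such that $${}^{K}Q_0=\tfrac12\,\begin{bmatrix}x_k^\top & u_k^\top & r_k^\top & \cdots & r_{k+N}^\top & 0^\top\end{bmatrix} H_K \begin{bmatrix}x_k^\top & u_k^\top & r_k^\top & \cdots & r_{k+N}^\top & 0^\top\end{bmatrix}^\top ,$$ where the trailing zero vector has dimension $(K-N)n$. Partitioning $H_K$ into blocks $h_{ab}$ according to the components $a,b\in\{x,u,r_0,r_1,\dots,r_K\}$ (of sizes $n,m,n,\dots,n$), the blocks have the following zero pattern: $h_{u r_0}=h_{r_0u}^\top=0$; $h_{r_0 r_j}=0$ for all $j\ge1$; $h_{r_1 r_j}=0$ for all $j\neq1$; and $h_{r_i r_0}=h_{r_i r_1}=0$ for all $i\ge2$. All other blocks ($h_{xx},h_{xu},h_{xr_j},h_{uu},h_{ur_j}$ for $j\ge1$, $h_{r_0r_0}$, $h_{r_1r_1}$, and $h_{r_ir_j}$ for $i,j\ge2$, together with their transposes) may be nonzero.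
   Context: Consider the discrete-time linear system $x_{i+1}=Ax_i+Bu_i$ with $x_i\in\mathbb{R}^n$, $u_i\in\mathbb{R}^m$, $A\in\mathbb{R}^{n\times n}$, $B\in\mathbb{R}^{n\times m}$, $(A,B)$ controllable. Fix a time step $k$ and $N\in\mathbb{N}$; references $r_i\in\mathbb{R}^n$ are given for $i=k,\dots,k+N$ and $r_i=0$ for $i>k+N$. The one-step cost is $c_i=\tfrac12\big((x_i-r_i)^\top Q(x_i-r_i)+u_i^\top Ru_i\big)$ with $Q=Q^\top\succeq0$, $R=R^\top\succ0$, and $\gamma\in[0,1)$. For an optimization horizon $K$, the reference-dependent Q-function is defined by backward recursion: ${}^{K}Q_K=c(x_{k+K},u_{k+K},r_{k+K})$ and, for $0\le\kappa<K$, ${}^{K}Q_\kappa=c_{k+\kappa}+\gamma\,{}^{K}Q_{\kappa+1}|_{u_{k+\kappa+1}=u^*_{k+\kappa+1}}$, where $x_{k+\kappa+1}=Ax_{k+\kappa}+Bu_{k+\kappa}$ and $u^*_{k+\kappa+1}$ minimizes ${}^{K}Q_{\kappa+1}$ over $u_{k+\kappa+1}$. Thus ${}^{K}Q_0$ is a function of $x_k,u_k,r_k,\dots,r_{k+K}$. *)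

(* Defs.v *)
From HB Require Import structures.
From mathcomp Require Import all_boot all_order all_algebra.
From mathcomp Require Import all_classical all_reals.
Set Implicit Arguments. Unset Strict Implicit. Unset Printing Implicit Defensive.
Import Order.TTheory GRing.Theory Num.Theory.
Local Open Scope ring_scope.
Local Open Scope classical_set_scope.

Definition qf (R : realType) (p : nat) (v : 'cV[R]_p) (M : 'M[R]_p) (w : 'cV[R]_p) : R :=
  ((v^T *m M *m w) 0 0).

Definition psd (R : realType) (p : nat) (M : 'M[R]_p) : Prop :=
  M^T = M /\ forall v : 'cV[R]_p, 0 <= qf v M v.

Definition pd (R : realType) (p : nat) (M : 'M[R]_p) : Prop :=
  M^T = M /\ forall v : 'cV[R]_p, v != 0 -> 0 < qf v M v.

Definition controllable (R : realType) (n m : nat) (A : 'M[R]_n) (B : 'M[R]_(n, m)) : Prop :=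
  \rank (\mxrow_(i < n) (A ^+ i *m B)) = n.

Definition cost (R : realType) (n m : nat) (Qw : 'M[R]_n) (Rw : 'M[R]_m)
  (x : 'cV[R]_n) (u : 'cV[R]_m) (r : 'cV[R]_n) : R :=
  (qf (x - r) Qw (x - r) + qf u Rw u) / 2.

(* Qrem j kappa x u  =  ^K Q_kappa (x_{k+kappa}, u_{k+kappa}) with j = K - kappa remaining
   steps; r i stands for r_{k+i}.  The value of Q_{kappa+1} at its minimizer u* is its
   minimum value, written as the infimum over u_{k+kappa+1}. *)
Fixpoint Qrem (R : realType) (n m : nat) (A : 'M[R]_n) (B : 'M[R]_(n, m))
  (Qw : 'M[R]_n) (Rw : 'M[R]_m) (gamma : R) (r : nat -> 'cV[R]_n)
  (j kappa : nat) (x : 'cV[R]_n) (u : 'cV[R]_m) : R :=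
  match j with
  | 0 => cost Qw Rw x u (r kappa)
  | j'.+1 => cost Qw Rw x u (r kappa) +
      gamma * inf [set Qrem A B Qw Rw gamma r j' kappa.+1 (A *m x + B *m u) v
                  | v in [set: 'cV[R]_m]]
  end.

Definition Q0 (R : realType) (n m : nat) (A : 'M[R]_n) (B : 'M[R]_(n, m))
  (Qw : 'M[R]_n) (Rw : 'M[R]_m) (gamma : R) (r : nat -> 'cV[R]_n) (K : nat)
  (x : 'cV[R]_n) (u : 'cV[R]_m) : R := Qrem A B Qw Rw gamma r K 0 x u.

(* Stacked vector z = [x; u; r_0; r_1; ...; r_K], of dimension n + m + (K+1) n
   = (K+2) n + m.  The r-part is ordered r_0 first (mxvec is row-major). *)
Definition stackz (R : realType) (n m K : nat) (x : 'cV[R]_n) (u : 'cV[R]_m)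
  (r : nat -> 'cV[R]_n) : 'cV[R]_(n + m + K.+1 * n) :=
  col_mx (col_mx x u) (mxvec (\matrix_(i < K.+1, j < n) r i j 0))^T.

Definition xidx (n m K : nat) (a : 'I_n) : 'I_(n + m + K.+1 * n) :=
  lshift (K.+1 * n) (lshift m a).
Definition uidx (n m K : nat) (a : 'I_m) : 'I_(n + m + K.+1 * n) :=
  lshift (K.+1 * n) (rshift n a).
Definition ridx (n m K : nat) (i : 'I_K.+1) (a : 'I_n) : 'I_(n + m + K.+1 * n) :=
  rshift (n + m) (mxvec_index i a).

Definition h_ur (R : realType) (n m K : nat) (H : 'M[R]_(n + m + K.+1 * n)) (j : 'I_K.+1)
  : 'M[R]_(m, n) := mxsub (@uidx n m K) (@ridx n m K j) H.
Definition h_ru (R : realType) (n m K : nat) (H : 'M[R]_(n + m + K.+1 * n)) (i : 'I_K.+1)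
  : 'M[R]_(n, m) := mxsub (@ridx n m K i) (@uidx n m K) H.
Definition h_rr (R : realType) (n m K : nat) (H : 'M[R]_(n + m + K.+1 * n)) (i j : 'I_K.+1)
  : 'M[R]_n := mxsub (@ridx n m K i) (@ridx n m K j) H.

(* Main.v *)
Require Import Defs.
From HB Require Import structures.
From mathcomp Require Import all_boot all_order all_algebra.
From mathcomp Require Import all_classical all_reals.
From mathcomp Require Import ring lra.
Set Implicit Arguments. Unset Strict Implicit. Unset Printing Implicit Defensive.
Import Order.TTheory GRing.Theory Num.Theory.
Local Open Scope ring_scope.
Section S.
Variable R : realType.
Definition bf p q (v : 'cV[R]_p) (M : 'M[R]_(p,q)) (w : 'cV[R]_q) := (v^T *m M *m w) 0 0.
Lemma bfDl p q (v1 v2 : 'cV_p) M (w : 'cV_q) : bf (v1 + v2) M w = bf v1 M w + bf v2 M w.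
Proof. by rewrite /bf linearD /= !mulmxDl mxE. Qed.
Lemma bfDr p q (v : 'cV_p) M (w1 w2 : 'cV_q) : bf v M (w1 + w2) = bf v M w1 + bf v M w2.
Proof. by rewrite /bf mulmxDr mxE. Qed.
Lemma bfDm p q (v : 'cV_p) M1 M2 (w : 'cV_q) : bf v (M1 + M2) w = bf v M1 w + bf v M2 w.
Proof. by rewrite /bf mulmxDr mulmxDl mxE. Qed.
Lemma bfZl p q (v : 'cV_p) c M (w : 'cV_q) : bf (c *: v) M w = c * bf v M w.
Proof. by rewrite /bf linearZ /= -!scalemxAl mxE. Qed.
Lemma bfZr p q (v : 'cV_p) c M (w : 'cV_q) : bf v M (c *: w) = c * bf v M w.
Proof. by rewrite /bf -scalemxAr mxE. Qed.
Lemma bfZm p q (v : 'cV_p) c M (w : 'cV_q) : bf v (c *: M) w = c * bf v M w.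
Proof. by rewrite /bf -scalemxAr -scalemxAl mxE. Qed.
Lemma bfNl p q (v : 'cV_p) M (w : 'cV_q) : bf (- v) M w = - bf v M w.
Proof. by rewrite -scaleN1r bfZl mulN1r. Qed.
Lemma bfNr p q (v : 'cV_p) M (w : 'cV_q) : bf v M (- w) = - bf v M w.
Proof. by rewrite -scaleN1r bfZr mulN1r. Qed.
Lemma bfNm p q (v : 'cV_p) M (w : 'cV_q) : bf v (- M) w = - bf v M w.
Proof. by rewrite -scaleN1r bfZm mulN1r. Qed.
Lemma bfT p q (v : 'cV_p) M (w : 'cV_q) : bf v M w = bf w M^T v.
Proof.
have -> : bf v M w = ((v^T *m M *m w)^T) 0 0 by rewrite mxE.
by rewrite !trmx_mul trmxK mulmxA.
Qed.
Lemma bfMl p q r (L : 'M_(p,r)) (v : 'cV_r) M (w : 'cV_q) : bf (L *m v) M w = bf v (L^T *m M) w.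
Proof. by rewrite /bf trmx_mul !mulmxA. Qed.
Lemma bfMr p q r (L : 'M_(q,r)) (v : 'cV_p) M (w : 'cV_r) : bf v M (L *m w) = bf v (M *m L) w.
Proof. by rewrite /bf !mulmxA. Qed.
Lemma bf0l p q M (w : 'cV_q) : bf (0 : 'cV_p) M w = 0.
Proof. by rewrite /bf linear0 !mul0mx mxE. Qed.
Lemma bf0r p q M (v : 'cV_p) : bf v M (0 : 'cV_q) = 0.
Proof. by rewrite /bf mulmx0 mxE. Qed.
Lemma bf0m p q (v : 'cV_p) (w : 'cV_q) : bf v 0 w = 0.
Proof. by rewrite /bf mulmx0 mul0mx mxE. Qed.
Lemma bf1 p (v w : 'cV_p) : bf v 1%:M w = bf w 1%:M v.
Proof. by rewrite bfT trmx1. Qed.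
Lemma qfE p (v : 'cV_p) M w : qf v M w = bf v M w. Proof. by []. Qed.
Lemma inf_min (E : set R) x : E x -> (forall y, E y -> x <= y) -> inf E = x.
Proof.
move=> Ex lb; apply/le_anti/andP; split.
  by apply: ge_inf => //; exists x.
by apply: lb_le_inf => //; exists x.
Qed.
Definition PD p (S : 'M[R]_p) := forall v, v != 0 -> 0 < qf v S v.
Lemma pd_unit p (S : 'M[R]_p) : PD S -> S \in unitmx.
Proof.
move=> H; rewrite unitmxE unitfE; apply/negP => /det0P [v nz vS].
have : v^T != 0 by rewrite trmx_eq0.
move=> /H; rewrite /qf trmxK vS mul0mx mxE ltxx //.
Qed.
Lemma bf1r p q (v : 'cV[R]_p) M (w : 'cV_q) : bf v M w = bf v 1%:M (M *m w).
Proof. by rewrite bfMr mul1mx. Qed.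
Lemma minq p q (S : 'M[R]_p) (C : 'M_(p,q)) (E : 'M_q) (w : 'cV_q) : S^T = S -> PD S ->
  let f := fun v => (qf v S v + 2 * bf v C w + qf w E w)/2 in
  let vs := - (invmx S *m (C *m w)) in
  (forall v, f vs <= f v) /\ f vs = qf w (E - C^T *m invmx S *m C) w / 2.
Proof.
move=> ST Spd f vs.
have Su := pd_unit Spd.
have Svs : S *m vs = - (C *m w) by rewrite mulmxN mulmxA mulmxV // mul1mx.
have key : forall d, bf d S vs = - bf d C w.
  by move=> d; rewrite bf1r Svs bfNr -bf1r.
have fvs : f vs = (bf vs C w + qf w E w) / 2.
  rewrite /f qfE key; congr (_ / 2); ring.
split.
  move=> v; have [d ->] : exists d, v = d + vs by exists (v - vs); rewrite subrK.
  rewrite -/(f vs) fvs /f !qfE !bfDl !bfDr key (bfT vs S d) ST key -subr_ge0.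
  have hd : 0 <= bf d S d.
    case: (eqVneq d 0) => [->|/Spd/ltW //]; by rewrite bf0l.
  have -> : (bf d S d + - bf d C w + (- bf d C w + bf vs S vs) + 2 * (bf d C w + bf vs C w) + qf w E w) / 2 -
   (bf vs C w + qf w E w) / 2 = bf d S d / 2 + (bf vs S vs + bf vs C w) / 2.
    by field.
  rewrite key; rewrite addNr mul0r addr0; exact: divr_ge0.
rewrite fvs !qfE bfDm bfNm /vs bfNl bfMl bfMl trmx_inv ST.
by rewrite mulmxA addrC.
Qed.
End S.
Section P.
Variables (R : realType) (n m K : nat) (A : 'M[R]_n) (B : 'M[R]_(n, m)) (Qw : 'M[R]_n) (Rw : 'M[R]_m) (gamma : R).
Hypotheses (Qpsd : psd Qw) (Rpd : pd Rw) (g0 : 0 <= gamma).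

Notation Qr := (Qrem A B Qw Rw gamma).

Definition rv (r : nat -> 'cV[R]_n) : 'cV[R]_(K.+1 * n) := (mxvec (\matrix_(i < K.+1, j < n) r i j 0))^T.
Definition wv (y : 'cV[R]_n) r : 'cV[R]_(n + K.+1 * n) := col_mx y (rv r).
Definition Ek (k : nat) : 'M[R]_(n, K.+1 * n) := \matrix_(a, b) (b == mxvec_index (inord k) a)%:R.

Lemma Ek_rv k r : (k <= K)%N -> Ek k *m rv r = r k.
Proof.
move=> kK; apply/matrixP => a j; rewrite ord1 !mxE.
rewrite (bigD1 (mxvec_index (inord k) a)) //= big1 => [|b /negbTE hb]; last by rewrite !mxE hb mul0r.
by rewrite addr0 !mxE eqxx mul1r mxvecE mxE inordK.
Qed.

Lemma inf_ext (F G : 'cV[R]_m -> R) : (forall v, F v = G v) ->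
  inf [set F v | v in [set: 'cV[R]_m]] = inf [set G v | v in [set: 'cV[R]_m]].
Proof. by move=> H; rewrite (funext H). Qed.

Lemma inf_at (F : 'cV[R]_m -> R) v0 : (forall v, F v0 <= F v) ->
  inf [set F v | v in [set: 'cV[R]_m]] = F v0.
Proof. by move=> H; apply: inf_min; [exists v0 | move=> _ [v _ <-]]. Qed.

Lemma Qrem_ext j : forall kappa x u r r', (forall i, (kappa <= i <= kappa + j)%N -> r i = r' i) ->
  Qr r j kappa x u = Qr r' j kappa x u.
Proof.
elim: j => [|j IH] kappa x u r r' H /=.
  by rewrite H // addn0 leqnn.
rewrite H ?leqnn ?leq_addr //; congr (_ + _ * _).
apply: inf_ext => v; apply: IH => i /andP [h1 h2]; apply: H.
by rewrite (ltnW h1) /= addnS -addSn.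
Qed.

Definition T k : 'M[R]_(n, n + K.+1 * n) := row_mx 1%:M (- Ek k).
Lemma T_wv k y r : (k <= K)%N -> T k *m wv y r = y - r k.
Proof. by move=> kK; rewrite /T /wv mul_row_col mul1mx mulNmx Ek_rv. Qed.

Lemma qf_ge0 p (M : 'M[R]_p) v : (M^T = M /\ forall v, 0 <= qf v M v) -> 0 <= qf v M v.
Proof. by case=> _ ->. Qed.
Lemma pd_ge0 p (M : 'M[R]_p) v : pd M -> 0 <= qf v M v.
Proof. case=> _ H; case: (eqVneq v 0) => [->|/H/ltW //]; by rewrite qfE bf0l. Qed.

Lemma cost_ge0 x u r : 0 <= cost Qw Rw x u r.
Proof. rewrite /cost; apply: divr_ge0 => //; apply: addr_ge0; [exact: qf_ge0 | exact: pd_ge0]. Qed.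

Lemma cost_rep k y v r : (k <= K)%N -> cost Qw Rw y v (r k) =
  (qf v Rw v + 2 * bf v 0 (wv y r) + qf (wv y r) ((T k)^T *m Qw *m T k) (wv y r)) / 2.
Proof.
move=> kK; rewrite /cost -T_wv // !qfE bfMl bfMr bf0m; congr (_ / 2); ring.
Qed.

Definition Gm : 'M[R]_(n + K.+1 * n) := block_mx A 0 0 1%:M.
Definition Bh : 'M[R]_(n + K.+1 * n, m) := col_mx B 0.
Lemma wv_step y v r : wv (A *m y + B *m v) r = Gm *m wv y r + Bh *m v.
Proof.
by rewrite /wv /Gm /Bh mul_block_col mul_col_mx !mul0mx mul1mx !addr0 add0r add_col_mx addr0.
Qed.
Lemma rv0 : rv (fun _ => 0) = 0.
Proof.
rewrite /rv (_ : \matrix_(i < K.+1, j < n) _ = 0); first by rewrite linear0 trmx0.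
by apply/matrixP => i j; rewrite !mxE.
Qed.
Lemma wv_B v : wv (B *m v) (fun _ => 0) = Bh *m v.
Proof. by rewrite /wv rv0 /Bh mul_col_mx mul0mx. Qed.

Definition Qform (S : 'M[R]_m) (C : 'M[R]_(m, n + K.+1 * n)) E (j kappa : nat) :=
  [/\ S^T = S, PD S,
     forall y v r, Qr r j kappa y v = (qf v S v + 2 * bf v C (wv y r) + qf (wv y r) E (wv y r)) / 2
   & forall y v r, 0 <= Qr r j kappa y v].

Lemma Vform S C E j kappa : Qform S C E j kappa -> forall y r,
  (exists v0, forall v, Qr r j kappa y v0 <= Qr r j kappa y v) /\
  inf [set Qr r j kappa y v | v in [set: 'cV[R]_m]] =
    qf (wv y r) (E - C^T *m invmx S *m C) (wv y r) / 2.
Proof.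
case=> ST Spd Hrep _ y r.
have [H1 H2] := @minq R _ _ S C E (wv y r) ST Spd.
split; first by exists (- (invmx S *m (C *m wv y r))) => v; rewrite !Hrep; apply: H1.
rewrite -H2 -Hrep; apply: inf_at => v; rewrite !Hrep; apply: H1.
Qed.

Lemma stage j : forall kappa, (kappa + j <= K)%N -> exists S C E, Qform S C E j kappa.
Proof.
elim: j => [|j IH] kappa hk.
  exists Rw, 0, ((T kappa)^T *m Qw *m T kappa); split.
  - by case: Rpd.
  - by case: Rpd.
  - by move=> y v r /=; rewrite cost_rep // -(addn0 kappa).
  - by move=> *; exact: cost_ge0.
have [S [C [E QF]]] : exists S C E, Qform S C E j kappa.+1 by apply: IH; rewrite addSn -addnS.
set P := E - C^T *m invmx S *m C.
set P2 := 2^-1 *: (P + P^T).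
have qP2 : forall w, qf w P2 w = qf w P w.
  by move=> w; rewrite !qfE bfZm bfDm (bfT w P^T) trmxK; field.
have P2T : P2^T = P2 by rewrite /P2 linearZ /= linearD /= trmxK addrC.
have Vge0 : forall y r, 0 <= qf (wv y r) P2 (wv y r).
  move=> y r; rewrite qP2; have [[v0 Hv0] HV] := Vform QF y r.
  have h : 0 <= qf (wv y r) P (wv y r) / 2 by rewrite -HV (inf_at Hv0); case: QF.
  lra.
clearbody P2.
exists (Rw + gamma *: (Bh^T *m P2 *m Bh)), (gamma *: (Bh^T *m P2 *m Gm)),
  ((T kappa)^T *m Qw *m T kappa + gamma *: (Gm^T *m P2 *m Gm)); split.
- rewrite linearD /= linearZ /= !trmx_mul trmxK P2T mulmxA.
  by case: Rpd => -> _.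
- move=> v nz; rewrite qfE bfDm bfZm -bfMr -bfMl -wv_B.
  have h1 : 0 < bf v Rw v by case: Rpd => _; apply.
  have h2 : 0 <= gamma * qf (wv (B *m v) (fun=> 0)) P2 (wv (B *m v) (fun=> 0)).
    apply: mulr_ge0 => //; exact: Vge0.
  rewrite qfE in h2; lra.
- move=> y v r /=.
  rewrite cost_rep; last by apply: leq_trans hk; rewrite leq_addr.
  have [_ HV] := Vform QF (A *m y + B *m v) r.
  rewrite HV -qP2 wv_step !qfE !bfDl !bfDr !bfDm !bfZm !bf0m !bfMl !bfMr.
  rewrite (bfT (wv y r) (Gm^T *m P2 *m Bh)) !trmx_mul trmxK P2T mulmxA.
  by field.
- move=> y v r /=; apply: addr_ge0; first exact: cost_ge0.
  apply: mulr_ge0 => //; have [_ HV] := Vform QF (A *m y + B *m v) r.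
  rewrite HV -qP2; apply: divr_ge0 => //; exact: Vge0.
Qed.

Lemma stackz_sum (x1 x2 : 'cV[R]_n) (u1 u2 : 'cV[R]_m) r1 r2 :
  stackz K x1 u1 r1 + stackz K x2 u2 r2 = stackz K (x1 + x2) (u1 + u2) (fun k => r1 k + r2 k).
Proof.
rewrite /stackz !add_col_mx -linearD /= -linearD /=; congr (col_mx _ (mxvec _)^T).
by apply/matrixP => i j; rewrite !mxE.
Qed.

Definition rdelta (i : nat) (a : 'I_n) : nat -> 'cV[R]_n := fun k => if k == i then delta_mx a 0 else 0.
Lemma rdelta_eq i a : rdelta i a i = delta_mx a 0.
Proof. by rewrite /rdelta eqxx. Qed.
Lemma rdelta_neq i a k : k != i -> rdelta i a k = 0.
Proof. by rewrite /rdelta => /negbTE ->. Qed.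

Lemma e_u (a : 'I_m) : delta_mx (uidx n K a) 0 = @stackz R n m K 0 (delta_mx a 0) (fun _ => 0).
Proof. by rewrite /uidx delta_mx_ushift delta_mx_dshift /stackz -[X in col_mx _ X]rv0. Qed.

Lemma e_r (i : 'I_K.+1) (a : 'I_n) : delta_mx (@ridx n m K i a) 0 = @stackz R n m K 0 0 (rdelta i a).
Proof.
rewrite /ridx delta_mx_dshift /stackz col_mx0; congr col_mx.
rewrite -trmx_delta -mxvec_delta; congr (mxvec _)^T.
apply/matrixP => i' j; rewrite !mxE /rdelta.
case: (eqVneq i' i) => [->|ne]; first by rewrite !eqxx /= mxE eqxx andbT.
rewrite ifF ?mxE //; apply/negbTE; exact: ne.
Qed.

Lemma bf_delta p (M : 'M[R]_p) k l : bf (delta_mx k 0) M (delta_mx l 0) = M k l.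
Proof. by rewrite /bf trmx_delta -rowE -colE !mxE. Qed.

Lemma Hentry (H : 'M[R]_(n + m + K.+1 * n)) : H^T = H ->
  (forall x u r, Qr r K 0 x u = qf (stackz K x u r) H (stackz K x u r) / 2) ->
  forall k l (x1 x2 : 'cV[R]_n) (u1 u2 : 'cV[R]_m) r1 r2,
  delta_mx k 0 = stackz K x1 u1 r1 -> delta_mx l 0 = stackz K x2 u2 r2 ->
  H k l = Qr (fun i => r1 i + r2 i) K 0 (x1 + x2) (u1 + u2) - Qr r1 K 0 x1 u1 - Qr r2 K 0 x2 u2.
Proof.
move=> HT Hrep k l x1 x2 u1 u2 r1 r2 e1 e2.
rewrite !Hrep -stackz_sum -e1 -e2 !qfE !bfDl !bfDr !bf_delta.
have -> : H l k = H k l by rewrite -{1}HT mxE.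
by field.
Qed.

Lemma Hexists : exists H : 'M[R]_(n + m + K.+1 * n), H^T = H /\
  forall x u r, Qr r K 0 x u = qf (stackz K x u r) H (stackz K x u r) / 2.
Proof.
have [S [C [E [ST Spd Hrep _]]]] : exists S C E, Qform S C E K 0 by apply: stage.
pose Pu : 'M[R]_(m, n + m + K.+1 * n) := row_mx (row_mx 0 1%:M) 0.
pose Pw : 'M[R]_(n + K.+1 * n, n + m + K.+1 * n) := block_mx (row_mx 1%:M 0) 0 0 1%:M.
have ePu : forall x u r, Pu *m stackz K x u r = u.
  by move=> x u r; rewrite /stackz mul_row_col mul_row_col !mul0mx mul1mx add0r addr0.
have ePw : forall x u r, Pw *m stackz K x u r = wv x r.
  move=> x u r; rewrite /stackz mul_block_col mul_row_col !mul0mx mul1mx !addr0 add0r.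
  by rewrite mul1mx.
pose H0 := Pu^T *m S *m Pu + 2 *: (Pu^T *m C *m Pw) + Pw^T *m E *m Pw.
exists (2^-1 *: (H0 + H0^T)); split.
  by rewrite linearZ /= linearD /= trmxK addrC.
move=> x u r; rewrite Hrep; set z := stackz K x u r.
rewrite -(ePu x u r) -(ePw x u r) -/z !qfE bfZm bfDm (bfT _ H0^T) trmxK.
rewrite /H0 !bfDm !bfZm !bfMl !bfMr; by field.
Qed.

Definition V1 (y : 'cV[R]_n) r := inf [set Qr r K.-1 1 y v | v in [set: 'cV[R]_m]].

Lemma F1 x u r : (1 <= K)%N -> Qr r K 0 x u = cost Qw Rw x u (r 0%N) + gamma * V1 (A *m x + B *m u) r.
Proof. by move=> hK; rewrite /V1 -{1}(prednK hK). Qed.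

Lemma F2 y r r' : (1 <= K)%N -> (forall i, (1 <= i <= K)%N -> r i = r' i) -> V1 y r = V1 y r'.
Proof.
move=> hK H; apply: inf_ext => v; apply: Qrem_ext => i hi; apply: H.
by rewrite add1n prednK in hi.
Qed.

Lemma F3 : (1 <= K)%N -> V1 0 (fun _ => 0) = 0.
Proof.
move=> hK; have [S [C [E QF]]] : exists S C E, Qform S C E K.-1 1 by apply: stage; rewrite add1n prednK.
rewrite /V1; have [_ ->] := Vform QF 0 (fun _ => 0).
by rewrite /wv rv0 col_mx0 qfE bf0l mul0r.
Qed.

Lemma inf_shift (F : 'cV[R]_m -> R) d : (exists v0, forall v, F v0 <= F v) ->
  inf [set F v + d | v in [set: 'cV[R]_m]] = inf [set F v | v in [set: 'cV[R]_m]] + d.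
Proof.
case=> v0 H; rewrite (inf_at H) (@inf_at (fun v => F v + d) v0) // => v.
by rewrite lerD2r.
Qed.

Definition W y r := V1 y r - qf (y - r 1%N) Qw (y - r 1%N) / 2.

Lemma F4 y r r' : (1 <= K)%N -> (forall i, (2 <= i <= K)%N -> r i = r' i) -> W y r = W y r'.
Proof.
move=> hK H.
have key : forall v, Qr r K.-1 1 y v = Qr r' K.-1 1 y v +
   (qf (y - r 1%N) Qw (y - r 1%N) / 2 - qf (y - r' 1%N) Qw (y - r' 1%N) / 2).
  move=> v; case eK : K.-1 => [|j] /=.
    by rewrite /cost; field.
  rewrite (@inf_ext _ (fun v0 => Qr r' j 2 (A *m y + B *m v) v0)).
    by rewrite /cost; field.
  move=> v0; apply: Qrem_ext => i /andP [h1 h2]; apply: H; rewrite h1 /=.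
  by rewrite -(prednK hK) eK.
rewrite /W /V1 (inf_ext key) inf_shift; first by ring.
have [S [C [E QF]]] : exists S C E, Qform S C E K.-1 1 by apply: stage; rewrite add1n prednK.
by have [[v0 Hv0] _] := Vform QF y r'; exists v0.
Qed.

Lemma cost00 : cost Qw Rw 0 0 0 = 0.
Proof. by rewrite /cost subr0 !qfE !bf0l addr0 mul0r. Qed.


Lemma V1z y r : (1 <= K)%N -> (forall i, (1 <= i)%N -> r i = 0) -> V1 y r = V1 y (fun _ => 0).
Proof. by move=> hK H; apply: F2 => // i /andP [hi _]; apply: H. Qed.

Lemma Wz y r : (1 <= K)%N -> (forall i, (2 <= i)%N -> r i = 0) -> W y r = W y (fun _ => 0).
Proof. by move=> hK H; apply: F4 => // i /andP [hi _]; apply: H. Qed.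

Lemma rdelta_ge i a k : (i < k)%N -> rdelta i a k = 0.
Proof. by move=> h; apply: rdelta_neq; rewrite neq_ltn h orbT. Qed.
Lemma rdelta_lt i a k : (k < i)%N -> rdelta i a k = 0.
Proof. by move=> h; apply: rdelta_neq; rewrite neq_ltn h. Qed.

Ltac costsimp := rewrite /cost ?subr0 ?sub0r ?addr0 ?add0r !qfE ?bfNl ?bfNr ?opprK ?bf0l ?bf0r.

Lemma Z_ur (a : 'I_m) (b : 'I_n) :
  Qr (fun k => 0 + rdelta 0 b k) K 0 (0 + 0) (delta_mx a 0 + 0) - Qr (fun _ => 0) K 0 0 (delta_mx a 0)
  - Qr (rdelta 0 b) K 0 0 0 = 0.
Proof.
have -> : (fun k => 0 + rdelta 0 b k) = rdelta 0 b by apply: funext => k; rewrite add0r.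
rewrite !addr0.
case: (posnP K) => [K0|hK].
  rewrite K0 /= rdelta_eq; costsimp; ring.
rewrite !F1 // !mulmx0 !add0r rdelta_eq (V1z _ hK (r := rdelta 0 b)); last by move=> i hi; rewrite rdelta_ge.
rewrite (V1z _ hK (r := rdelta 0 b)); last by move=> i hi; rewrite rdelta_ge.
rewrite F3 //; costsimp; ring.
Qed.

Lemma Z_r0 (j : nat) (a b : 'I_n) : (1 <= j <= K)%N ->
  Qr (fun k => rdelta 0 a k + rdelta j b k) K 0 (0 + 0) (0 + 0) - Qr (rdelta 0 a) K 0 0 0
  - Qr (rdelta j b) K 0 0 0 = 0.
Proof.
case/andP => hj hjK; have hK : (1 <= K)%N by apply: leq_trans hjK.
rewrite !addr0 !F1 // !mulmx0 !addr0 rdelta_eq rdelta_lt // addr0.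
rewrite (V1z _ hK (r := rdelta 0 a)); last by move=> i hi; rewrite rdelta_ge.
rewrite (@F2 0 (fun k => rdelta 0 a k + rdelta j b k) (rdelta j b)) //; last first.
  by move=> i /andP [hi _]; rewrite rdelta_ge // add0r.
rewrite F3 //; costsimp; ring.
Qed.

Lemma Z_r1 (j : nat) (a b : 'I_n) : (2 <= j <= K)%N ->
  Qr (fun k => rdelta 1 a k + rdelta j b k) K 0 (0 + 0) (0 + 0) - Qr (rdelta 1 a) K 0 0 0
  - Qr (rdelta j b) K 0 0 0 = 0.
Proof.
case/andP => hj hjK; have hK : (1 <= K)%N by apply: leq_trans hjK; apply: ltnW.
have hj0 : (0 < j)%N by apply: leq_trans hj.
rewrite !addr0 !F1 // !mulmx0 !addr0 !rdelta_lt // addr0.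
have eV : forall r, V1 0 r = qf (0 - r 1%N) Qw (0 - r 1%N) / 2 + W 0 r by move=> r; rewrite /W; ring.
rewrite !eV (Wz _ hK (r := rdelta 1 a)); last by move=> i hi; rewrite rdelta_ge.
rewrite (@F4 0 (fun k => rdelta 1 a k + rdelta j b k) (rdelta j b)) //; last first.
  by move=> i /andP [hi _]; rewrite rdelta_ge // add0r.
have W0 : W 0 (fun _ => 0) = 0 by rewrite /W F3 // subr0 qfE bf0l mul0r subr0.
rewrite W0 rdelta_eq rdelta_lt // addr0 cost00; costsimp; ring.
Qed.

End P.
Theorem theorem1 (R : realType) (n m N K : nat)
  (A : 'M[R]_n) (B : 'M[R]_(n, m)) (Qw : 'M[R]_n) (Rw : 'M[R]_m) (gamma : R) :
  controllable A B -> psd Qw -> pd Rw -> 0 <= gamma -> gamma < 1 ->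
  (N <= K)%N ->
  exists H : 'M[R]_(n + m + K.+1 * n),
    H^T = H /\
    (forall (x : 'cV[R]_n) (u : 'cV[R]_m) (r : nat -> 'cV[R]_n),
       (forall i, (N < i)%N -> r i = 0) ->
       Q0 A B Qw Rw gamma r K x u = qf (stackz K x u r) H (stackz K x u r) / 2) /\
    h_ur H 0 = 0 /\ h_ru H 0 = 0 /\
    (forall j : 'I_K.+1, (1 <= j)%N -> h_rr H 0 j = 0) /\
    (forall j : 'I_K.+1, (j != 1 :> nat) -> (1 <= K)%N -> h_rr H (inord 1) j = 0) /\
    (forall i : 'I_K.+1, (2 <= i)%N ->
       h_rr H i 0 = 0 /\ ((1 <= K)%N -> h_rr H i (inord 1) = 0)).
Proof.
move=> _ Qpsd Rpd g0 _ _.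
have [H [HT Hrep]] := Hexists K A B Qpsd Rpd g0.
have Hent := Hentry HT Hrep.
have Hsym : forall k l, H k l = H l k by move=> k l; rewrite -{1}HT mxE.
have i1 : forall (hK : (1 <= K)%N), ((inord 1 : 'I_K.+1) : nat) = 1%N by move=> hK; rewrite inordK.
have Zu : forall a b, H (uidx n K a) (@ridx n m K 0 b) = 0.
  by move=> a b; rewrite (Hent _ _ _ _ _ _ _ _ (e_u R n K a) (e_r R m 0 b)); exact: (Z_ur K A B Qpsd Rpd g0).
have Z0 : forall (j : 'I_K.+1) a b, (1 <= j)%N -> H (@ridx n m K 0 a) (@ridx n m K j b) = 0.
  move=> j a b hj; rewrite (Hent _ _ _ _ _ _ _ _ (e_r R m 0 a) (e_r R m j b)).
  by apply: (Z_r0 A B Qpsd Rpd g0); rewrite hj -ltnS ltn_ord.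
have Z1 : forall (j : 'I_K.+1) a b, (2 <= j)%N -> H (@ridx n m K (inord 1) a) (@ridx n m K j b) = 0.
  move=> j a b hj; have hK : (1 <= K)%N by rewrite -ltnS (leq_ltn_trans _ (ltn_ord j)) // ltnW.
  rewrite (Hent _ _ _ _ _ _ _ _ (e_r R m (inord 1) a) (e_r R m j b)) i1 //.
  by apply: (Z_r1 A B Qpsd Rpd g0); rewrite hj -ltnS ltn_ord.
exists H; split => //; split; first by move=> x u r _; exact: Hrep.
split; first by apply/matrixP => a b; rewrite !mxE Zu.
split; first by apply/matrixP => a b; rewrite !mxE Hsym Zu.
split; first by move=> j hj; apply/matrixP => a b; rewrite !mxE Z0.
split.
  move=> j hj hK; apply/matrixP => a b; rewrite !mxE.
  case: (posnP j) => [j0|jpos].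
    have -> : j = 0 by apply: val_inj.
    by rewrite Hsym Z0 // i1.
  apply: Z1; move: hj jpos; case: (nat_of_ord j) => [|[|k]] //.
move=> i hi; split.
  by apply/matrixP => a b; rewrite !mxE Hsym Z0 //; apply: leq_trans hi.
move=> hK; apply/matrixP => a b; rewrite !mxE Hsym Z1 //.
Qed.
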